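(* Let $K$ be an algebraically closed field of characteristic zero, $c\ge 4$, and $\mathfrak{g}=M_{2,c}$. Then $$\chi(\mathfrak{g})=\dim\mathfrak{g}-4=2\alpha(\mathfrak{g})-\dim\mathfrak{g}=\frac{c^2-c-4}{2}.$$
   Context: Lower central series: $\mathfrak{h}^1=\mathfrak{h}$, $\mathfrak{h}^{k+1}=[\mathfrak{h},\mathfrak{h}^k]$. $F_g$ is the free Lie algebra over $K$ on $g$ generators, $F_{g,c}=F_g/F_g^{c+1}$, and $M_{g,c}:=F_{g,c}/[F_{g,c}^2,F_{g,c}^2]$. $\alpha(\mathfrak{h})$ is the maximal dimension of an abelian subalgebra; for $\ell\in\mathfrak{h}^*$, $\mathfrak{h}(\ell)=\{y\in\mathfrak{h}\mid\ell([x,y])=0\ \forall x\in\mathfrak{h}\}$ and the index is $\chi(\mathfrak{h})=\min_{\ell\in\mathfrak{h}^*}\dim\mathfrak{h}(\ell)$. (One has $\dim M_{2,c}=(c^2-c+4)/2$.) *)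

(* Defs.v *)
From mathcomp Require Import all_boot all_algebra.
Set Implicit Arguments. Unset Strict Implicit. Unset Printing Implicit Defensive.
Import GRing.Theory.
Local Open Scope ring_scope.

Section LieNotions.
Variables (K : fieldType) (V : vectType K) (br : V -> V -> V).

(* An abelian subalgebra: a subspace on which all brackets vanish
   (such a subspace is automatically a subalgebra). *)
Definition abelian_subspace (U : {vspace V}) : Prop :=
  forall u v, u \in U -> v \in U -> br u v = 0.

Definition alpha_is (m : nat) : Prop :=
  (exists U : {vspace V}, abelian_subspace U /\ \dim U = m) /\
  (forall U : {vspace V}, abelian_subspace U -> (\dim U <= m)%N).

Definition stab_dim (l : V -> K) (n : nat) : Prop :=
  exists U : {vspace V},
    (forall y, y \in U <-> (forall x, l (br x y) = 0)) /\ \dim U = n.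

Definition index_is (n : nat) : Prop :=
  (exists l : {linear V -> K^o}, stab_dim l n) /\
  (forall (l : {linear V -> K^o}) (m : nat), stab_dim l m -> (n <= m)%N).

End LieNotions.

(* The free metabelian nilpotent Lie algebra M_{2,c} of rank 2, class c.   *)
(* Standard model: basis x = inl 0, y = inl 1, and e_(a,b) (a + b <= c-2), *)
(* where e_(a,b) = (ad x)^a (ad y)^b [x,y]; so                            *)
(*   [x,y] = e_(0,0), [x,e_(a,b)] = e_(a+1,b), [y,e_(a,b)] = e_(a,b+1)    *)
(* (zero when the degree a+b+3 exceeds c), [e,e'] = 0.                     *)
Definition M2idx (c : nat) : finType :=
  ('I_2 + {p : 'I_c * 'I_c | (p.1 + p.2 <= c - 2)%N})%type.

Section M2c.
Variables (K : fieldType) (c : nat).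

Definition M2coef (i j k : M2idx c) : K :=
  match k with
  | inl _ => 0
  | inr p =>
    let a := ((val p).1 : nat) in let b := ((val p).2 : nat) in
    match i, j with
    | inl s, inl t =>
        if (a == 0%N) && (b == 0%N) then
          (((s : nat) == 0%N) && ((t : nat) == 1%N))%:R
          - (((s : nat) == 1%N) && ((t : nat) == 0%N))%:R
        else 0
    | inl s, inr q =>
        let a' := ((val q).1 : nat) in let b' := ((val q).2 : nat) in
        if (s : nat) == 0%N then ((a == a'.+1) && (b == b'))%:R
        else ((a == a') && (b == b'.+1))%:R
    | inr q, inl t =>
        let a' := ((val q).1 : nat) in let b' := ((val q).2 : nat) in
        if (t : nat) == 0%N then - ((a == a'.+1) && (b == b'))%:R
        else - ((a == a') && (b == b'.+1))%:R
    | inr _, inr _ => 0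
    end
  end.

Definition M2 : vectType K := {ffun M2idx c -> K^o}.

Definition M2br (u v : M2) : M2 :=
  \sum_(i : M2idx c) \sum_(j : M2idx c)
     (u i * v j) *: ([ffun k => M2coef i j k] : M2).

End M2c.

(* Main.v *)
Require Import Defs.
From mathcomp Require Import all_boot all_algebra.
Import GRing.Theory.
Local Open Scope ring_scope.
From HB Require Import structures.
From mathcomp Require Import ring zify.
From Stdlib Require Import Classical.


Section Gen.
Variables (K : fieldType) (I : finType).
Local Notation V := {ffun I -> K^o}.

Definition delta (i : I) : V := [ffun k => ((k == i)%:R : K^o)].

Lemma ffun_dim : \dim (fullv : {vspace V}) = #|I|.
Proof. by rewrite dimvf /dim /= muln1. Qed.

Lemma sum_delta (F : I -> K) (a : I) : \sum_j F j * ((j == a)%:R) = F a.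
Proof.
rewrite (bigD1 a) //= eqxx mulr1 big1 ?addr0 // => j /negPf ->; by rewrite mulr0.
Qed.

Lemma expand (v : V) : v = \sum_k v k *: delta k.
Proof.
apply/ffunP => k; rewrite sum_ffunE.
rewrite (bigD1 k) //= big1 ?addr0.
  by rewrite ffunE /delta ffunE eqxx; rewrite /GRing.scale /= mulr1.
move=> j /negPf hj; rewrite ffunE /delta ffunE eq_sym hj.
by rewrite /GRing.scale /= mulr0.
Qed.

Lemma free_deltas (s : seq I) : uniq s -> free [seq delta i | i <- s].
Proof.
move=> us.
have := @freeP _ _ _ (in_tuple [seq delta i | i <- s]).
move=> H; apply/H => k hk i.
have x0 : I by case: s {H hk k us} i => [[]|a]//.
have si : (i < size s)%N by rewrite -(size_map delta) ltn_ord.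
have := congr1 (fun f : V => f (nth x0 s i)) hk.
rewrite sum_ffunE ffunE.
rewrite (bigD1 i) //= big1 ?addr0.
  by rewrite (nth_map x0) // ffunE /delta ffunE eqxx /GRing.scale /= mulr1.
move=> j hj; rewrite (nth_map x0); last by rewrite -(size_map delta) ltn_ord.
rewrite ffunE /delta ffunE nth_uniq //; last by rewrite -(size_map delta) ltn_ord.
rewrite (_ : (i == j :> nat) = false) ?scaler0 //.
by apply/negbTE; rewrite eq_sym; exact: hj.
Qed.


Definition Zs (s : seq I) : {vspace V} :=
  <<[seq delta i | i <- enum [predC s]]>>%VS.

Lemma dimZ (s : seq I) : uniq s -> \dim (Zs s) = (#|I| - size s)%N.
Proof.
move=> us; rewrite /Zs.
have /eqP -> := free_deltas _ (enum_uniq [predC s]).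
rewrite size_map -cardE -(card_uniqP us) -(cardC [in s]).
by rewrite addKn.
Qed.

Lemma memZ (s : seq I) (v : V) : v \in Zs s <-> (forall k, k \in s -> v k = 0).
Proof.
split.
  move=> /coord_span -> k ks; rewrite sum_ffunE big1 // => i _.
  rewrite ffunE.
  have x0 := k.

  rewrite (nth_map x0); last by rewrite size_tuple.
  rewrite /delta ffunE.
  have : nth x0 (enum [predC s]) i \in enum [predC s].
    by apply: mem_nth; rewrite size_tuple.
  rewrite mem_enum inE => hn.
  case: eqP => [e|_]; last by rewrite scaler0.
  by rewrite -e ks in hn.
move=> H; rewrite (expand v) (bigID [in s]) /= big1 ?add0r.
  apply: memv_suml => k hk; apply: memvZ; apply: memv_span.
  by apply: map_f; rewrite mem_enum inE.
by move=> k ks; rewrite H // scale0r.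
Qed.

End Gen.
Arguments delta {K I}.
Arguments sum_delta {K I}.
Arguments expand {K I}.
Arguments free_deltas {K I}.
Arguments Zs {K I}.
Arguments dimZ {K I}.
Arguments memZ {K I}.
Arguments ffun_dim {K I}.


Section M2n.
Variables (K : fieldType) (n : nat).
Local Notation c := n.+4.
Local Notation I := (M2idx c).
Local Notation V := (M2 K c).
Local Notation br := (@M2br K c).

Definition ix : I := inl (Ordinal (isT : (0 < 2)%N)).
Definition iy : I := inl (Ordinal (isT : (1 < 2)%N)).
Definition mkE a b (ha : (a < c)%N) (hb : (b < c)%N) (h : (a + b <= c - 2)%N) : I :=
  inr (exist _ (Ordinal ha, Ordinal hb) h).
Definition e00 : I := @mkE 0 0 isT isT isT.
Definition e10 : I := @mkE 1 0 isT isT isT.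
Definition e01 : I := @mkE 0 1 isT isT isT.
Definition e20 : I := @mkE 2 0 isT isT isT.
Definition e02 : I := @mkE 0 2 isT isT isT.

Lemma brE (u v : V) k : br u v k = \sum_i \sum_j u i * v j * M2coef K i j k.
Proof.
rewrite /M2br sum_ffunE; apply: eq_bigr => i _; rewrite sum_ffunE.
apply: eq_bigr => j _; rewrite ffunE ffunE //.
Qed.

Lemma coord_two (u v : V) k i1 j1 :
  (forall i j, M2coef K i j k = ((i == i1) && (j == j1))%:R - ((i == j1) && (j == i1))%:R) ->
  br u v k = u i1 * v j1 - u j1 * v i1.
Proof.
move=> H; rewrite brE.
under eq_bigr => i _ do under eq_bigr => j _ do rewrite H mulrBr.
rewrite (_ : \sum_i _ = \sum_i (u i * v j1 * (i == i1)%:R - u i * v i1 * (i == j1)%:R)).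
  by rewrite sumrB !sum_delta.
apply: eq_bigr => i _; rewrite sumrB; congr (_ - _).
  case: (i =P i1) => _ /=.
    by rewrite mulr1 (sum_delta (fun j => u i * v j)).
  by rewrite mulr0 big1 // => j _; rewrite mulr0.
case: (i =P j1) => _ /=.
  by rewrite mulr1 (sum_delta (fun j => u i * v j)).
by rewrite mulr0 big1 // => j _; rewrite mulr0.
Qed.

Lemma eq0S b : (0 == b.+1)%N = false. Proof. by []. Qed.
Lemma eqS0 b : (b.+1 == 0)%N = false. Proof. by []. Qed.
Lemma eqE_inr a b (ha : (a < c)%N) (hb : (b < c)%N) (h : (a + b <= c - 2)%N) a0 b0 ha0 hb0 h0 :
  (inr (exist _ (Ordinal ha, Ordinal hb) h) == @mkE a0 b0 ha0 hb0 h0 :> I) = (a0 == a) && (b0 == b).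
Proof.
rewrite /mkE; apply/eqP/andP => [[-> ->] | [/eqP e1 /eqP e2]]; first by rewrite !eqxx.
subst; f_equal; apply: val_inj => /=; f_equal; exact: val_inj.
Qed.

Ltac simp := rewrite /e00 /e10 /e01 /e20 /e02 ?eqE_inr; rewrite ?eqSS ?eq0S ?eqS0 ?andbF ?andFb ?andbT ?andTb ?subr0 ?sub0r ?oppr0 ?mulr0n ?mulr1n ?opprK; try reflexivity.

Lemma C00 (u v : V) : br u v e00 = u ix * v iy - u iy * v ix.
Proof.
apply: coord_two => i j.
case: i => [[[|[|s]] hs] | [[[a ha] [b hb]] hab]];
case: j => [[[|[|t]] ht] | [[[a' ha'] [b' hb']] hab']] //=.
all: simp.
Qed.

Ltac coordtac := apply: coord_two;
  let i := fresh "i" in let j := fresh "j" in intros i j;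
  case: i => [[[|[|s]] hs] | [[[a ha] [b hb]] hab]];
  case: j => [[[|[|t]] ht] | [[[a' ha'] [b' hb']] hab']] //=; simp.

Lemma C10 (u v : V) : br u v e10 = u ix * v e00 - u e00 * v ix.
Proof.
coordtac.
Qed.



Lemma C01 (u v : V) : br u v e01 = u iy * v e00 - u e00 * v iy.
Proof. coordtac. Qed.
Lemma C20 (u v : V) : br u v e20 = u ix * v e10 - u e10 * v ix.
Proof. coordtac. Qed.
Lemma C02 (u v : V) : br u v e02 = u iy * v e01 - u e01 * v iy.
Proof. coordtac. Qed.

Lemma coef_rr q q' k : M2coef K (c := c) (inr q) (inr q') k = 0.
Proof. by case: k. Qed.

Lemma inl_cases (s : 'I_2) : inl s = ix \/ inl s = iy.
Proof.
case: s => [[|[|m]] hs] //; [left|right]; congr inl; exact: val_inj.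
Qed.

Lemma brG (u v : V) k : br u v k = \sum_i u i * (\sum_j v j * M2coef K i j k).
Proof.
rewrite brE; apply: eq_bigr => i _; rewrite mulr_sumr; apply: eq_bigr => j _.
by rewrite mulrA.
Qed.

Lemma br_delta a (v : V) k : br (delta a) v k = \sum_j v j * M2coef K a j k.
Proof.
rewrite brG -(sum_delta (fun i => \sum_j v j * M2coef K i j k) a).
by apply: eq_bigr => i _; rewrite ffunE mulrC.
Qed.

Lemma br_lin2 (a : V) (k : K) (v w : V) : br a (k *: v + w) = k *: br a v + br a w.
Proof.
apply/ffunP => x; rewrite !ffunE !brE.
rewrite [X in _ = X + _]mulr_sumr -big_split; apply: eq_bigr => i _ /=.
rewrite mulr_sumr -big_split; apply: eq_bigr => j _ /=.
rewrite !ffunE /GRing.scale /=.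
ring.
Qed.

Definition inE0 (v : V) := v ix = 0 /\ v iy = 0.

Lemma abelE (u v : V) : inE0 u -> inE0 v -> br u v = 0.
Proof.
move=> [ux uy] [vx vy]; apply/ffunP => k; rewrite brE ffunE big1 // => i _.
rewrite big1 // => j _.
case: i => [s | q].
  by case: (inl_cases s) => ->; rewrite ?ux ?uy !mul0r.
case: j => [t | q'].
  by case: (inl_cases t) => ->; rewrite ?vx ?vy mulr0 mul0r.
by rewrite coef_rr mulr0.
Qed.

Lemma decomp (w v : V) : inE0 v ->
  br w v = w ix *: br (delta ix) v + w iy *: br (delta iy) v.
Proof.
move=> [vx vy]; apply/ffunP => k; rewrite !ffunE !br_delta brG.
rewrite [in LHS](bigD1 ix) // [in LHS](bigD1 iy) //=.
rewrite (_ : \sum_(i | (i != ix) && (i != iy)) _ = 0) ?addr0 //.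
apply: big1 => i /andP[hx hy]; case: i hx hy => [s | q].
  by case: (inl_cases s) => ->; rewrite eqxx.
move=> _ _; rewrite big1 ?mulr0 // => j _.
case: j => [t | q'].
  by case: (inl_cases t) => ->; rewrite ?vx ?vy mul0r.
by rewrite coef_rr mulr0.
Qed.

End M2n.
Arguments ix {n}. Arguments iy {n}. Arguments e00 {n}. Arguments e10 {n}.
Arguments e01 {n}. Arguments e20 {n}. Arguments e02 {n}.
Arguments inE0 {K n}.
Arguments C00 {K n}. Arguments C10 {K n}. Arguments C01 {K n}. Arguments C20 {K n}. Arguments C02 {K n}.
Arguments decomp {K n}. Arguments abelE {K n}. Arguments br_lin2 {K n}.
Arguments br_delta {K n}. Arguments inl_cases {n}.


Section Main.
Variables (K : fieldType) (n : nat).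
Local Notation c := n.+4.
Local Notation I := (M2idx c).
Local Notation V := (M2 K c).
Local Notation br := (@M2br K c).

Lemma addline (U : {vspace V}) w : w \notin U -> \dim (U + <[w]>) = (\dim U).+1.
Proof.
move=> wU; rewrite dimv_disjoint_sum.
  rewrite dim_vline; case: eqP => [w0|]; last by rewrite addn1.
  by rewrite w0 mem0v in wU.
apply/eqP; rewrite -subv0; apply/subvP => z /memv_capP [zU /vlineP [k zk]].
rewrite memv0; case: (k =P 0) => [k0|/eqP k0]; first by rewrite zk k0 scale0r.
have : w \in U by rewrite -(scalerK k0 w) -zk memvZ.
by rewrite (negPf wU).
Qed.

Lemma dimKo : \dim (fullv : {vspace K^o}) = 1%N.
Proof. by rewrite dimvf. Qed.

Lemma img_le1 (f : 'Hom(V, K^o)) (U : {vspace V}) : (\dim (f @: U) <= 1)%N.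
Proof. by rewrite -dimKo dimvS // subvf. Qed.

Lemma cap_ker (f : 'Hom(V, K^o)) (U : {vspace V}) : (\dim U <= (\dim (U :&: lker f)).+1)%N.
Proof.
have := limg_ker_dim f U; have := img_le1 f U; move=> h1 h2.
lia.
Qed.

Definition fa (l : {linear V -> K^o}) (a : V) (v : V) : K^o := l (br a v).
Lemma fa_lin l a : linear (fa l a).
Proof. by move=> k u w; rewrite /fa br_lin2 linearP. Qed.
HB.instance Definition _ l a := GRing.isLinear.Build K V K^o *:%R (fa l a) (fa_lin l a).

Lemma index_lb (l : {linear V -> K^o}) m : stab_dim br l m -> (#|I| - 4 <= m)%N.
Proof.
move=> [U [HU <-]].
pose Z := Zs (K := K) [:: ix (n:=n); iy].
pose f1 := linfun (fa l (delta ix)).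
pose f2 := linfun (fa l (delta iy)).
pose W := ((Z :&: lker f1) :&: lker f2)%VS.
have dZ : \dim Z = (#|I| - 2)%N by rewrite dimZ.
have dW : (#|I| - 4 <= \dim W)%N.
  have := cap_ker f1 Z; have := cap_ker f2 (Z :&: lker f1)%VS.
  rewrite -/W dZ => a b; move: a; rewrite -ltnS => a; have := leq_trans b a; rewrite !leq_subLR => h; by apply: (leq_trans h); rewrite !addnS.
apply: leq_trans dW _; apply: dimvS; apply/subvP => v.
rewrite !memv_cap !memv_ker !lfunE /= => /andP[/andP[vZ /eqP h1] /eqP h2].
have [vx vy] : inE0 v.
  by split; apply: (proj1 (memZ _ v) vZ); rewrite !inE eqxx ?orbT.
apply/HU => w; rewrite decomp; last by split.
by rewrite linearD !linearZ /= -/(fa l _ v) h1 -/(fa l _ v) h2 !scaler0 addr0.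
Qed.


Definition l0 (v : V) : K^o := v e20 + v e02.
Lemma l0_lin : linear l0.
Proof. by move=> k u w; rewrite /l0 !ffunE /GRing.scale /=; ring. Qed.
HB.instance Definition _ := GRing.isLinear.Build K V K^o *:%R l0 l0_lin.

Lemma uniq4 : uniq [:: ix (n:=n); iy; e10; e01].
Proof. by []. Qed.

Lemma index_wit : stab_dim br l0 (#|I| - 4).
Proof.
exists (Zs (K := K) [:: ix (n:=n); iy; e10; e01]); split; last by rewrite dimZ // uniq4.
move=> v; split.
  move/memZ => H w; rewrite /l0 C20 C02 !H ?inE ?eqxx ?orbT //.
  by rewrite !mulr0 !subr0 addr0.
move=> H; apply/memZ => k; rewrite !inE => /or4P [] /eqP ->.
- have := H (delta e10); rewrite /l0 C20 C02 !ffunE /=.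
  by rewrite !(mul0r, mul1r, subr0, sub0r, addr0, add0r, oppr0) => /eqP; rewrite ?oppr_eq0 => /eqP.
- have := H (delta e01); rewrite /l0 C20 C02 !ffunE /=.
  by rewrite !(mul0r, mul1r, subr0, sub0r, addr0, add0r, oppr0) => /eqP; rewrite ?oppr_eq0 => /eqP.
- have := H (delta ix); rewrite /l0 C20 C02 !ffunE /=.
  by rewrite !(mul0r, mul1r, subr0, sub0r, addr0, add0r, oppr0) => /eqP; rewrite ?oppr_eq0 => /eqP.
- have := H (delta iy); rewrite /l0 C20 C02 !ffunE /=.
  by rewrite !(mul0r, mul1r, subr0, sub0r, addr0, add0r, oppr0) => /eqP; rewrite ?oppr_eq0 => /eqP.
Qed.


Lemma memZ2 (v : V) : v \in Zs [:: ix (n:=n); iy] <-> inE0 v.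
Proof.
split.
  by move/memZ => H; split; apply: H; rewrite !inE eqxx ?orbT.
by move=> [vx vy]; apply/memZ => k; rewrite !inE => /orP [] /eqP ->.
Qed.

Lemma alpha_wit : exists U : {vspace V}, abelian_subspace br U /\ \dim U = (#|I| - 2)%N.
Proof.
exists (Zs [:: ix (n:=n); iy]); split; last by rewrite dimZ.
by move=> u v /memZ2 hu /memZ2 hv; apply: abelE.
Qed.

Lemma key (U : {vspace V}) (u w : V) : abelian_subspace br U -> u \in U ->
  u ix * w iy - u iy * w ix != 0 -> w e00 = 0 -> w ix = 0 \/ w iy = 0 ->
  (u ix != 0) || (u iy != 0) -> (\dim U + 2 <= #|I|)%N.
Proof.
move=> HU uU nz w00 wxy uxy.
have wU : w \notin U.
  apply/negP => wU; have := HU u w uU wU.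
  move/(congr1 (fun f : V => f e00)); rewrite C00 ffunE => h.
  by rewrite h eqxx in nz.
have dU : delta e00 \notin (U + <[w]>)%VS.
  apply/negP => /memv_addP [v vU [z /vlineP [b ->] e]].
  have ev : v = delta e00 - b *: w by rewrite e addrK.
  have h := congr1 (fun f : V => f e00) (HU u v uU vU).
  rewrite /= C00 ev !ffunE /= in h.
  have hb : b * (u ix * w iy - u iy * w ix) = 0.
    apply/eqP; rewrite -oppr_eq0; apply/eqP; rewrite -h /GRing.scale /=; ring.
  move/eqP: hb; rewrite mulf_eq0 (negPf nz) orbF => /eqP b0.
  rewrite b0 scale0r subr0 in ev.
  have h1 := congr1 (fun f : V => f e10) (HU u v uU vU).
  have h2 := congr1 (fun f : V => f e01) (HU u v uU vU).
  rewrite /= C10 ev !ffunE /= mulr1 mulr0 subr0 in h1.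
  rewrite /= C01 ev !ffunE /= mulr1 mulr0 subr0 in h2.
  by rewrite h1 h2 eqxx in uxy.
have := dimvS (subvf ((U + <[w]>) + <[delta e00]>)%VS).
by rewrite ffun_dim addline // addline // addn2.
Qed.


Lemma alpha_ub (U : {vspace V}) : abelian_subspace br U -> (\dim U <= #|I| - 2)%N.
Proof.
move=> HU.
case: (classic (forall u, u \in U -> inE0 u)) => [H | H].
  apply: leq_trans (dimvS (_ : (U <= Zs [:: ix (n:=n); iy])%VS)) _; last by rewrite dimZ.
  by apply/subvP => u /H /memZ2.
have [u [uU nE]] : exists u, u \in U /\ ~ inE0 u.
  apply: NNPP => H2; apply: H => u uU; apply: NNPP => nE; apply: H2; by exists u.
have uxy : (u ix != 0) || (u iy != 0).
  case: (u ix =P 0) => [a|//]; case: (u iy =P 0) => [b|//].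
  by exfalso; exact: nE (conj a b).
suff : (\dim U + 2 <= #|I|)%N.
  move=> h; rewrite leq_subRL; last by apply: leq_trans h; rewrite leq_addl.
  by rewrite addnC.
case: (u ix =P 0) => [ux0 | /eqP ux].
  have := @key U u (delta ix) HU uU; rewrite !ffunE /=; apply => //.
  - by rewrite ux0 mul0r sub0r mulr1 oppr_eq0; move: uxy; rewrite ux0 eqxx.
  - by right.
have := @key U u (delta iy) HU uU; rewrite !ffunE /=; apply => //.
- by rewrite mulr1 mulr0 subr0.
- by left.
Qed.
End Main.


Lemma sum_lt m c : (\sum_(j < c) ((j < m)%N : nat) = minn m c)%N.
Proof.
elim: c => [|c IH]; first by rewrite big_ord0 minn0.
rewrite big_ord_recr /= IH; case: ltnP => h; lia.
Qed.

Lemma tri c : (2 * \sum_(i < c) (c.-1 - i) = c * c.-1)%N.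
Proof.
elim: c => [|c IH]; first by rewrite big_ord0.
rewrite big_ord_recl /= mulnDr.
rewrite (eq_bigr (fun i : 'I_c => c.-1 - i)%N); last first.
  by move=> i _; rewrite /bump /=; lia.
rewrite IH; case: c {IH} => //= c; lia.
Qed.

Lemma cardI c : (#|M2idx c| = 2 + #|[pred p : 'I_c * 'I_c | (p.1 + p.2 <= c - 2)%N]|)%N.
Proof. by rewrite card_sum card_ord card_sig. Qed.

Lemma cnt c : (2 <= c)%N -> (2 * #|[pred p : 'I_c * 'I_c | (p.1 + p.2 <= c - 2)%N]| = c * c.-1)%N.
Proof.
move=> c2.
have -> : #|[pred p : 'I_c * 'I_c | (p.1 + p.2 <= c - 2)%N]| =
    (\sum_(i < c) \sum_(j < c) ((i + j <= c - 2)%N : nat))%N.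
  rewrite -sum1_card pair_big big_mkcond /=; apply: eq_bigr => [[i j]] _ /=.
  by rewrite inE /=; case: (_ <= _)%N.
rewrite -tri; congr (2 * _)%N; apply: eq_bigr => -[i hi] _ /=.
rewrite (eq_bigr (fun j : 'I_c => ((j < c.-1 - i)%N : nat))).
  rewrite sum_lt; apply/minn_idPl; rewrite -subn1; exact: leq_trans (leq_subr _ _) (leq_subr _ _).
move=> -[j hj] _ /=; congr nat_of_bool.
rewrite -!subn1; apply/idP/idP => h; lia.
Qed.


Theorem theorem5p4 (K : closedFieldType) (c : nat) :
  [pchar K] =i pred0 -> (4 <= c)%N ->
  exists chi alpha : nat,
    index_is (M2br (K := K) (c := c)) chi /\
    alpha_is (M2br (K := K) (c := c)) alpha /\
    chi%:Z = (\dim (fullv : {vspace M2 K c}))%:Z - 4 /\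
    chi%:Z = 2 * alpha%:Z - (\dim (fullv : {vspace M2 K c}))%:Z /\
    2 * chi%:Z = (c ^ 2)%:Z - c%:Z - 4.
Proof.
move=> _; case: c => [|[|[|[|n]]]] // _.
exists (#|M2idx n.+4| - 4)%N, (#|M2idx n.+4| - 2)%N.
rewrite ffun_dim.
have hc := @cnt n.+4 isT.
have hI := cardI n.+4.
set S := #|[pred p : 'I_n.+4 * 'I_n.+4 | _]| in hc hI.
rewrite hI.
split.
  split.
    exists (l0 K n : {linear _ -> _}).
    by have := index_wit K n; rewrite hI.
  by move=> l m /index_lb; rewrite hI.
split.
  split.
    by have := alpha_wit K n; rewrite hI.
  by move=> U /alpha_ub; rewrite hI.
have S6 : (6 <= S)%N by rewrite -(leq_pmul2l (isT : (0 < 2)%N)) hc /=; nia.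
move: hc S6; clear hI; move: S => S hc S6.
rewrite !expnS expn0 muln1.
split; first lia.
split; lia.
Qed.
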